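(* Let $a>0$ and, for $x_i\in\mathbb{R}$, let $P_+^a(x_i)$ (resp. $P_-^a(x_i)$) be the smallest $x>x_i$ at which the solution of $y'=-ay-\sin(3\pi x/2)$ (resp. $y'=-ay-\sin(\pi x/2)$) with $y(x_i)=0$ vanishes. Then $$P_+^a(4n-2)\in\left(4n-\tfrac43,\,4n-\tfrac23\right)\quad\forall n\in\mathbb{N}\setminus\{0\},\qquad P_-^a(4n)\in(4n+2,\,4n+4)\quad\forall n\in\mathbb{N}.$$ *)

(* Defs.v *)
From Stdlib Require Import Reals Lra.
From Coquelicot Require Import Coquelicot.
Open Scope R_scope.

Definition ivp_solution (a omega x0 : R) (y : R -> R) : Prop :=
  y x0 = 0 /\ forall x : R, is_derive y x (- a * y x - sin (omega * x)).

Definition first_zero_after (y : R -> R) (x0 p : R) : Prop :=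
  x0 < p /\ y p = 0 /\ forall t : R, x0 < t < p -> y t <> 0.

(* Main.v *)
Require Import Defs.
From Stdlib Require Import Reals Lra.
From Coquelicot Require Import Coquelicot.
Open Scope R_scope.

Lemma gen (a k h x0 : R) (y : R -> R) : 0 < a -> 0 < k -> 0 < h -> k * h = PI ->
  y x0 = 0 -> (forall x, is_derive y x (- a * y x - sin (k * (x - x0)))) ->
  exists p, (x0 < p /\ y p = 0 /\ forall t, x0 < t < p -> y t <> 0) /\ x0 + h < p < x0 + 2 * h.
Proof.
intros ha hk hh hkh hy0 hd.
pose (z := fun x => exp (a * x) * y x).
pose (zd := fun x => - exp (a * x) * sin (k * (x - x0))).
assert (Dz : forall x, derivable_pt_lim z x (zd x)).
{ intro x. apply is_derive_Reals.
  assert (He : is_derive (fun t => exp (a * t)) x (a * exp (a * x))).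
  { auto_derive; [exact I| ring]. }
  pose proof (is_derive_mult _ _ x _ _ He (hd x) (fun n m => Rmult_comm n m)) as H.
  unfold z, zd. eapply is_derive_ext; [intro t; reflexivity|].
  replace (- exp (a * x) * sin (k * (x - x0))) with
    (plus (mult (a * exp (a * x)) (y x)) (mult (exp (a * x)) (- a * y x - sin (k * (x - x0))))).
  exact H.
  unfold plus, mult; simpl. ring. }
assert (z0 : z x0 = 0) by (unfold z; rewrite hy0; ring).
assert (MV : forall u v, u < v -> exists c, z v - z u = zd c * (v - u) /\ u < c < v).
{ intros u v huv. apply MVT_cor2; auto. }
assert (neg1 : forall t, x0 < t <= x0 + h -> z t < 0).
{ intros t Ht. destruct (MV x0 t ltac:(lra)) as [c [Hc1 Hc2]].
  assert (0 < sin (k * (c - x0))).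
  { apply sin_gt_0. apply Rmult_lt_0_compat; lra.
    rewrite <- hkh. apply Rmult_lt_compat_l; lra. }
  assert (0 < exp (a * c)) by apply exp_pos.
  unfold zd in Hc1. rewrite z0 in Hc1.
  assert (0 < exp (a * c) * sin (k * (c - x0)) * (t - x0)).
  { apply Rmult_lt_0_compat; [apply Rmult_lt_0_compat|]; lra. }
  nra. }
assert (inc : forall u v, x0 + h <= u < v -> v <= x0 + 2 * h -> z u < z v).
{ intros u v Huv Hv. destruct (MV u v ltac:(lra)) as [c [Hc1 Hc2]].
  assert (sin (k * (c - x0)) < 0).
  { apply sin_lt_0; rewrite <- hkh.
    - apply Rmult_lt_compat_l; lra.
    - replace (2 * (k * h)) with (k * (2 * h)) by ring. apply Rmult_lt_compat_l; lra. }
  assert (0 < exp (a * c)) by apply exp_pos.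
  unfold zd in Hc1.
  assert (0 < exp (a * c) * (- sin (k * (c - x0))) * (v - u)).
  { apply Rmult_lt_0_compat; [apply Rmult_lt_0_compat|]; lra. }
  nra. }
assert (pos2 : 0 < z (x0 + 2 * h)).
{ pose (D := fun t => z (x0 + h + t) + z (x0 + t)).
  pose (Dd := fun t => zd (x0 + h + t) + zd (x0 + t)).
  assert (DD : forall c, 0 <= c <= h -> derivable_pt_lim D c (Dd c)).
  { intros c _. unfold D, Dd.
    apply derivable_pt_lim_plus.
    - replace (zd (x0 + h + c)) with (zd (x0 + h + c) * 1) by ring.
      apply (derivable_pt_lim_comp (fun t => x0 + h + t) z).
      + apply is_derive_Reals. auto_derive; [exact I | ring].
      + apply Dz.
    - replace (zd (x0 + c)) with (zd (x0 + c) * 1) by ring.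
      apply (derivable_pt_lim_comp (fun t => x0 + t) z).
      + apply is_derive_Reals. auto_derive; [exact I | ring].
      + apply Dz. }
  destruct (MVT_cor2 D Dd 0 h hh DD) as [c [Hc1 Hc2]].
  assert (Hs : 0 < sin (k * c)).
  { apply sin_gt_0. apply Rmult_lt_0_compat; lra.
    rewrite <- hkh. apply Rmult_lt_compat_l; lra. }
  assert (He : exp (a * (x0 + c)) < exp (a * (x0 + h + c))).
  { apply exp_increasing. nra. }
  assert (Ddc : Dd c = (exp (a * (x0 + h + c)) - exp (a * (x0 + c))) * sin (k * c)).
  { unfold Dd, zd.
    replace (k * (x0 + h + c - x0)) with (k * c + PI) by (rewrite <- hkh; ring).
    rewrite neg_sin. replace (x0 + c - x0) with c by ring. ring. }
  assert (0 < Dd c * (h - 0)).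
  { rewrite Ddc. apply Rmult_lt_0_compat; [apply Rmult_lt_0_compat|]; lra. }
  unfold D in Hc1. rewrite !Rplus_0_r in Hc1. rewrite z0 in Hc1.
  replace (x0 + h + h) with (x0 + 2 * h) in Hc1 by ring. lra. }
assert (cont : continuity z).
{ intro x. apply derivable_continuous_pt. exists (zd x). apply Dz. }
assert (zh : z (x0 + h) < 0) by (apply neg1; lra).
destruct (IVT z (x0 + h) (x0 + 2 * h) cont ltac:(lra) zh pos2) as [p [Hp1 Hp2]].
assert (Hp3 : x0 + h < p).
{ destruct (Req_dec p (x0 + h)) as [e|e]; [subst p; lra | lra]. }
assert (Hp4 : p < x0 + 2 * h).
{ destruct (Req_dec p (x0 + 2 * h)) as [e|e]; [rewrite e in Hp2; lra | lra]. }
assert (yz : forall t, y t = 0 <-> z t = 0).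
{ intro t. unfold z. pose proof (exp_pos (a * t)). split; intro Hq.
  - rewrite Hq; ring.
  - apply Rmult_integral in Hq. destruct Hq; lra. }
exists p. split; [|lra]. split; [lra|]. split.
- apply yz; exact Hp2.
- intros t Ht Hyt. apply yz in Hyt.
  destruct (Rle_dec t (x0 + h)) as [H1|H1].
  + pose proof (neg1 t ltac:(lra)). lra.
  + pose proof (inc t p ltac:(lra) ltac:(lra)). lra.
Qed.

Theorem lemma7 (a : R) (ha : 0 < a) :
  (forall (n : nat), (1 <= n)%nat ->
     forall y : R -> R, ivp_solution a (3 * PI / 2) (4 * INR n - 2) y ->
     exists p : R, first_zero_after y (4 * INR n - 2) p /\
                   4 * INR n - 4 / 3 < p < 4 * INR n - 2 / 3) /\
  (forall (n : nat),
     forall y : R -> R, ivp_solution a (PI / 2) (4 * INR n) y ->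
     exists p : R, first_zero_after y (4 * INR n) p /\
                   4 * INR n + 2 < p < 4 * INR n + 4).
Proof.
pose proof PI_RGT_0 as hpi.
split.
- intros n _ y [hy0 hd].
    assert (Hs : forall x : R, sin (3 * PI / 2 * x) = - sin (3 * PI / 2 * (x - (4 * INR n - 2)))).
    { intro x. set (v := 3 * PI / 2 * (x - (4 * INR n - 2)) + PI).
      rewrite <- neg_sin. fold v.
      transitivity (sin ((v - 4 * PI) + 2 * INR (3 * n) * PI)).
      { f_equal. unfold v. rewrite mult_INR. change (INR 3) with (1+1+1). field. }
      rewrite sin_period.
      rewrite <- (sin_period (v - 4 * PI) 2). f_equal. change (INR 2) with (1+1). ring. }
  destruct (gen a (3 * PI / 2) (2/3) (4 * INR n - 2) (fun x => - y x) ha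
     ltac:(lra) ltac:(lra) ltac:(field) ltac:(cbv beta; rewrite hy0; ring)) as [p [[H1 [H2 H3]] H4]].
  + intro x; change R in x.
    eapply is_derive_ext; [intro t; reflexivity|].
    replace (- a * - y x - sin (3 * PI / 2 * (x - (4 * INR n - 2))))
      with (opp (- a * y x - sin (3 * PI / 2 * x))).
    2: { rewrite (Hs x). unfold opp; simpl. ring. }
    apply (is_derive_opp y x). apply hd.
  + exists p. split; [|lra]. split; [lra|]. split.
    * lra.
    * intros t Ht Hyt. apply (H3 t Ht). rewrite Hyt. ring.
- intros n y [hy0 hd].
  destruct (gen a (PI / 2) 2 (4 * INR n) y ha
     ltac:(lra) ltac:(lra) ltac:(field) hy0) as [p [Hp H4]].
  + intro x; change R in x.
    replace (sin (PI / 2 * (x - 4 * INR n))) with (sin (PI / 2 * x)). apply hd.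
    rewrite <- (sin_period (PI / 2 * (x - 4 * INR n)) n). f_equal. field.
  + exists p. split; [exact Hp|lra].
Qed.
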